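(* Let $G$ act by isometries on a $\delta$-hyperbolic geodesic space $X$, let $\alpha\ge3\delta$ and let $U\subset G$ be $\alpha$-reduced at $p\in X$. Then for every $w\in\mathbf F(U)$, $$2\alpha|w|_U\le|wp-p|\le L(U,p)\,|w|_U.$$ In particular the natural homomorphism $\mathbf F(U)\to G$ is injective.
   Context: Hyperbolicity: $(x,z)_t\ge\min\{(x,y)_t,(y,z)_t\}-\delta$ with $(x,y)_z=\frac12(|x-z|+|y-z|-|x-y|)$. $U\subset G$ finite is $\alpha$-reduced at $p$ if $U\cap U^{-1}=\varnothing$ and for distinct $u_1,u_2\in U\sqcup U^{-1}$, $(u_1p,u_2p)_p<\frac12\min\{|u_1p-p|,|u_2p-p|\}-\alpha-50\delta$. $\mathbf F(U)$ is the free group on $U$, $|w|_U$ its word length, and $wp$ means the image of $w$ in $G$ applied to $p$. $L(U,p)=\max_{u\in U}|up-p|$. *)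

(* Defs.v *)
From HB Require Import structures.
From mathcomp Require Import all_boot all_order all_algebra.
From mathcomp Require Import reals.
Set Implicit Arguments. Unset Strict Implicit. Unset Printing Implicit Defensive.
Import Order.TTheory GRing.Theory Num.Theory.

Section Defs.
Variable R : realType.
Variable X : Type.
Variable d : X -> X -> R.

Local Open Scope ring_scope.

Definition is_metric : Prop :=
  [/\ (forall x y, d x y = 0 <-> x = y),
      (forall x y, d x y = d y x) &
      (forall x y z, d x z <= d x y + d y z)].

Definition gromov (x y z : X) : R := (d x z + d y z - d x y) / 2.

Definition hyperbolic (delta : R) : Prop :=
  forall x y z t : X,
    gromov x z t >= Num.min (gromov x y t) (gromov y z t) - delta.

Definition geodesic : Prop :=
  forall x y : X, exists gam : R -> X,
    [/\ gam 0 = x, gam (d x y) = y &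
        forall s t, 0 <= s <= d x y -> 0 <= t <= d x y ->
          d (gam s) (gam t) = `|s - t| ].
End Defs.

Section GroupDefs.
Local Open Scope group_scope.
Variable G : groupType.

Definition isometric_action (R : realType) (X : Type) (d : X -> X -> R)
    (act : G -> X -> X) : Prop :=
  [/\ (forall x, act 1 x = x),
      (forall g h x, act (g * h) x = act g (act h x)) &
      (forall g x y, d (act g x) (act g y) = d x y)].

Definition alpha_reduced (R : realType) (X : Type) (d : X -> X -> R)
    (act : G -> X -> X) (delta alpha : R) (U : seq G) (p : X) : Prop :=
  (forall u, u \in U -> u^-1 \notin U) /\
  (forall u1 u2, u1 \in U ++ [seq u^-1 | u <- U] -> u2 \in U ++ [seq u^-1 | u <- U] ->
     u1 != u2 ->
     (gromov d (act u1 p) (act u2 p) p <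
        Num.min (d (act u1 p) p) (d (act u2 p) p) / 2 - alpha - 50 * delta)%R).

(* Free group F(U) modelled by reduced words: a letter (u, b) stands for
   u if b = false and for u^-1 if b = true. *)
Definition letter_val (l : G * bool) : G := if l.2 then l.1^-1 else l.1.

Fixpoint no_cancel (w : seq (G * bool)) : bool :=
  match w with
  | l1 :: ((l2 :: _) as w') =>
      ~~ ((l1.1 == l2.1) && (l1.2 != l2.2)) && no_cancel w'
  | _ => true
  end.

Definition reduced_word (U : seq G) (w : seq (G * bool)) : bool :=
  all (fun l => l.1 \in U) w && no_cancel w.

Definition word_eval (w : seq (G * bool)) : G :=
  foldr (fun l g => letter_val l * g) 1 w.

Definition word_length (w : seq (G * bool)) : nat := size w.

Definition Lmax (R : realType) (X : Type) (d : X -> X -> R)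
    (act : G -> X -> X) (U : seq G) (p : X) : R :=
  (\big[Num.max/0%R]_(u <- U) d (act u p) p)%R.
End GroupDefs.

(* Main.v *)
Require Import Defs.
From HB Require Import structures.
From mathcomp Require Import all_boot all_order all_algebra.
From mathcomp Require Import reals.
From mathcomp Require Import lra.
Import Order.TTheory GRing.Theory Num.Theory.

Section Proof.
Variables (G : groupType) (R : realType) (X : Type)
    (d : X -> X -> R) (act : G -> X -> X) (delta alpha : R)
    (U : seq G) (p : X).
Hypotheses (hm : is_metric d) (hd0 : (0 <= delta)%R)
  (hhyp : hyperbolic d delta) (hact : isometric_action d act)
  (hal : (3 * delta <= alpha)%R) (hred : alpha_reduced d act delta alpha U p).

Local Open Scope ring_scope.

Ltac slra := have := hd0; have := hal; lra.

Definition V := U ++ [seq (u^-1)%g | u <- U].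

Lemma dsym x y : d x y = d y x.
Proof. by case: hm. Qed.
Lemma dxx x : d x x = 0.
Proof. by case: hm => h _ _; apply/h. Qed.
Lemma dtri x y z : d x z <= d x y + d y z.
Proof. by case: hm. Qed.
Lemma dge0 x y : 0 <= d x y.
Proof. have := dtri x y x; rewrite dxx (dsym y x); slra. Qed.

Lemma act1 x : act 1%g x = x. Proof. by case: hact. Qed.
Lemma actM g h x : act (g * h)%g x = act g (act h x). Proof. by case: hact. Qed.
Lemma actI g x y : d (act g x) (act g y) = d x y. Proof. by case: hact. Qed.
Lemma actVK g x : act (g^-1)%g (act g x) = x.
Proof. by rewrite -actM mulVg act1. Qed.
Lemma actKV g x : act g (act (g^-1)%g x) = x.
Proof. by rewrite -actM mulgV act1. Qed.

Lemma ellV v : d (act (v^-1)%g p) p = d (act v p) p.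
Proof. by rewrite -{2}(actVK v p) actI dsym. Qed.

Lemma gromov_ge0 x y z : 0 <= gromov d x y z.
Proof. rewrite /gromov; have := dtri x z y; rewrite (dsym z y); slra. Qed.

Lemma gromovC x y z : gromov d x y z = gromov d y x z.
Proof. by rewrite /gromov (dsym y x); slra. Qed.

Lemma Vinv a : a \in V -> (a^-1)%g \in V.
Proof.
rewrite !mem_cat => /orP [h|/mapP [u hu ->]].
  by apply/orP; right; apply/mapP; exists a.
by rewrite invgK hu.
Qed.

Lemma Vneq_inv a : a \in V -> a != (a^-1)%g.
Proof.
case: hred => h1 _.
rewrite mem_cat => /orP [h|/mapP [u hu ->]].
  by apply/eqP => e; move: (h1 _ h); rewrite -e h.
by rewrite invgK; apply/eqP => e; move: (h1 _ hu); rewrite e hu.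
Qed.

Lemma H a b : a \in V -> b \in V -> a != b ->
  gromov d (act a p) (act b p) p <
    Num.min (d (act a p) p) (d (act b p) p) / 2 - alpha - 50 * delta.
Proof. by case: hred => _ h; apply: h. Qed.

Lemma Hl a b : a \in V -> b \in V -> a != b ->
  gromov d (act a p) (act b p) p < d (act b p) p / 2 - alpha - 50 * delta.
Proof.
move=> ha hb hab; have := H _ _ ha hb hab.
have : Num.min (d (act a p) p) (d (act b p) p) <= d (act b p) p.
  by rewrite ge_min lexx orbT.
slra.
Qed.

Arguments H [a b].
Arguments Hl [a b].
Arguments Vinv [a].
Arguments Vneq_inv [a].

Fixpoint chainOK (vs : seq G) : bool :=
  match vs with
  | v1 :: ((v2 :: _) as t) => ((v1^-1)%g != v2) && chainOK t
  | _ => true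
  end.

Definition prodv (vs : seq G) : G := foldr (fun v g => (v * g)%g) 1%g vs.
Definition D vs := d (act (prodv vs) p) p.

Definition Mprop (vs : seq G) : Prop :=
  match vs with
  | [::] => True
  | v :: t =>
    [/\ 2 * alpha * (size vs)%:R < D vs,
        (forall a, a \in V -> a != v ->
           gromov d (act a p) (act (prodv vs) p) p <=
           gromov d (act a p) (act v p) p + delta) &
        d (act v p) p / 2 + alpha + 49 * delta <
           gromov d (act v p) (act (prodv vs) p) p]
  end.

Lemma main vs : all (mem V) vs -> chainOK vs -> Mprop vs.
Proof.
elim: vs => [//|v t IH] /= /andP [hv hall] hch.
have IHt : Mprop t.
  by apply: IH => //; case: t hch {hall} => // ? ? /andP [].
clear IH.
have hE : gromov d (act (v^-1)%g p) (act (prodv t) p) p <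
    d (act v p) p / 2 - alpha - 49 * delta.
  move: hch IHt; case: t hall => [|v' t'] /=.
    move=> _ _ _; rewrite act1 /gromov dxx ellV.
    have hn : (v^-1)%g != v by rewrite eq_sym; exact: Vneq_inv hv.
    have := Hl (Vinv hv) hv hn.
    have := gromov_ge0 (act (v^-1)%g p) (act v p) p; slra.
  move=> /andP [hv' _] /andP [hvv _] [_ h2 _].
  have := h2 _ (Vinv hv) hvv.
  have hvv2 : v' != v^-1%g by rewrite eq_sym.
  have := Hl hv' (Vinv hv) hvv2; rewrite ellV.
  rewrite gromovC.
  have : gromov d (act v' p) (act (v^-1)%g p) p =
         gromov d (act (v^-1)%g p) (act v' p) p by rewrite gromovC.
  slra.
have Dt0 : 2 * alpha * (size t)%:R <= D t.
  case: t IHt {hE hch hall} => [|v' t'] /=.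
    by rewrite /D /= act1 dxx; slra.
  by case => h _ _; apply: ltW.
set r' := act (prodv t) p.
set l := d (act v p) p.
set E := gromov d (act (v^-1)%g p) r' p.
have hr : act ((v * prodv t)%g) p = act v r' by rewrite /= actM.
have Dt : E = (l + D t - D (v :: t)) / 2.
  rewrite /E /gromov ellV -/l /D hr -/r'.
  by rewrite -(actI v (act (v^-1)%g p) r') actKV (dsym p).
have hg : gromov d (act v p) (act ((v * prodv t)%g) p) p = l - E.
  rewrite hr /gromov -/l Dt /D hr -/r'.
  have -> : d (act v p) (act v r') = d r' p by rewrite actI dsym.
  rewrite /r'; slra.
have hE' : E < l / 2 - alpha - 49 * delta := hE.
split.
- have -> : (size (v :: t))%:R = (size t)%:R + 1 :> R by rewrite /= -addn1 natrD.
  rewrite mulrDr mulr1.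
  move: Dt0; set m := 2 * alpha * (size t)%:R => Dt0.
  slra.
- move=> a ha hav.
  have hc := Hl ha hv hav; rewrite -/l in hc.
  have hy := hhyp (act a p) (act ((v * prodv t)%g) p) (act v p) p.
  rewrite (gromovC (act (v * prodv t)%g p) (act v p)) hg in hy.
  have hl0 : 0 <= l by apply: dge0.
  move: hy; set Xg := gromov d _ (act ((v * prodv t)%g) p) p.
  set c := gromov d (act a p) (act v p) p in hc *.
  have : ~~ (l - E <= c + delta). by rewrite -ltNge; slra.
  move=> hn hy.
  have : Num.min Xg (l - E) <= c + delta by slra.
  by rewrite ge_min (negbTE hn) orbF.
- by rewrite hg; have := dge0 (act v p) p; rewrite -/l; slra.
Qed.


Arguments main [vs].

Lemma Dnil : D [::] = 0.
Proof. by rewrite /D /= act1 dxx. Qed.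

Lemma inj_vals vs1 vs2 : all (mem V) vs1 -> chainOK vs1 ->
  all (mem V) vs2 -> chainOK vs2 -> prodv vs1 = prodv vs2 -> vs1 = vs2.
Proof.
have pos n : 0 <= 2 * alpha * n%:R.
  by rewrite mulr_ge0 // mulr_ge0 //; slra.
have tailOK v t : chainOK (v :: t) -> chainOK t.
  by case: t => // ? ? /andP [].
have h0 : d (act (prodv [::]) p) p = 0 by rewrite /= act1 dxx.
elim: vs1 vs2 => [|v t IH] [|v' t'] //.
- move=> _ _ ha hc e.
  have := main ha hc; case=> h _ _; move: h.
  rewrite /D -e h0 => h; exfalso; move: h; have := pos (size (v' :: t')); slra.
- move=> ha hc _ _ e.
  have := main ha hc; case=> h _ _; move: h.
  rewrite /D e h0 => h; exfalso; move: h; have := pos (size (v :: t)); slra.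
move=> ha hc ha' hc' e.
have [evv|nvv] := eqVneq v v'.
  subst v'; congr (_ :: _); apply: IH.
  - by case/andP: ha.
  - exact: tailOK hc.
  - by case/andP: ha'.
  - exact: tailOK hc'.
  by move: e => /= /mulgI.
have := main ha hc; case=> _ h2 _.
have := main ha' hc'; case=> _ _ h3.
have hv' : v' \in V by case/andP: ha'.
have hv : v \in V by case/andP: ha.
have nvv' : v' != v by rewrite eq_sym.
have := h2 _ hv' nvv'.
rewrite e => h4; exfalso; move: h4.
have := Hl hv hv' nvv.
rewrite (gromovC (act v p)).
move: h3; set g1 := gromov d (act v' p) (act (prodv (v' :: t')) p) p.
set g2 := gromov d (act v' p) (act v p) p.
slra.
Qed.

Lemma eval_prodv w : word_eval w = prodv (map (@letter_val G) w).
Proof. by elim: w => //= l w ->. Qed.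

Lemma letter_in l : l.1 \in U -> letter_val l \in V.
Proof.
case: l => u [] /= hu; rewrite mem_cat.
  by apply/orP; right; apply/mapP; exists u.
by rewrite hu.
Qed.

Lemma all_vals w : all (fun l => l.1 \in U) w -> all (mem V) (map (@letter_val G) w).
Proof.
elim: w => //= l w IH /andP [h1 h2]; rewrite IH // andbT.
exact: letter_in.
Qed.

Lemma chain_vals w : all (fun l => l.1 \in U) w -> no_cancel w ->
  chainOK (map (@letter_val G) w).
Proof.
case: hred => h1 _.
elim: w => [|l1 [|l2 w] IH] // /andP [hl1 hall] /andP [hnc hnc'].
have -> : chainOK (map (@letter_val G) [:: l1, l2 & w]) =
  ((letter_val l1)^-1 != letter_val l2)%g && chainOK (map (@letter_val G) (l2 :: w)) by [].
rewrite IH // andbT.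
move: hall => /andP [hl2 _].
clear IH hnc'.
move: hnc hl1 hl2; case: l1 => u1 [] ; case: l2 => u2 [] /= hnc hu1 hu2;
  apply/eqP => e; rewrite /letter_val /= ?invgK in e.
- by move: (h1 _ hu2); rewrite -e hu1.
- by move: hnc; rewrite e eqxx.
- by move: hnc; rewrite (invg_inj e) eqxx.
- by move: (h1 _ hu1); rewrite e hu2.
Qed.

Lemma letter_inj l1 l2 : l1.1 \in U -> l2.1 \in U ->
  letter_val l1 = letter_val l2 -> l1 = l2.
Proof.
case: hred => h1 _.
case: l1 => u1 [] ; case: l2 => u2 [] /= hu1 hu2 e; rewrite /letter_val /= in e.
- by rewrite (invg_inj e).
- by move: (h1 _ hu1); rewrite e hu2.
- by move: (h1 _ hu2); rewrite -e hu1.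
- by rewrite e.
Qed.

Lemma map_letter_inj w1 w2 : all (fun l => l.1 \in U) w1 ->
  all (fun l => l.1 \in U) w2 ->
  map (@letter_val G) w1 = map (@letter_val G) w2 -> w1 = w2.
Proof.
elim: w1 w2 => [|l1 w1 IH] [|l2 w2] //= /andP [h1 h1'] /andP [h2 h2'] [e e'].
by rewrite (letter_inj _ _ h1 h2 e) (IH w2).
Qed.

Lemma le_Lmax u : u \in U -> d (act u p) p <= Lmax d act U p.
Proof.
rewrite /Lmax; elim: U => //= x s IH; rewrite big_cons in_cons.
case/orP => [/eqP ->|h]; rewrite le_max ?lexx //.
by rewrite IH ?orbT.
Qed.

Lemma upper w : all (fun l => l.1 \in U) w ->
  d (act (word_eval w) p) p <= Lmax d act U p * (size w)%:R.
Proof.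
elim: w => [|l w IH] /=; first by rewrite act1 dxx mulr0.
case/andP => hl hw.
have hL : d (act (letter_val l) p) p <= Lmax d act U p.
  by case: l hl => u [] /= hu; rewrite ?ellV le_Lmax.
rewrite actM -addn1 natrD mulrDr mulr1.
have := dtri (act (letter_val l) (act (word_eval w) p)) (act (letter_val l) p) p.
rewrite actI.
have := IH hw.
move: hL; set L := Lmax _ _ _ _; set m := L * _.
set a1 := d (act (word_eval w) p) p; set a2 := d (act (letter_val l) p) p.
slra.
Qed.

Lemma final_stmt :
  (forall w : seq (G * bool), reduced_word U w ->
     (2 * alpha * (word_length w)%:R <= d (act (word_eval w) p) p)%R /\
     (d (act (word_eval w) p) p <= Lmax d act U p * (word_length w)%:R)%R) /\
  (forall w1 w2 : seq (G * bool), reduced_word U w1 -> reduced_word U w2 ->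
     word_eval w1 = word_eval w2 -> w1 = w2).
Proof.
split.
  move=> w /andP [ha hn]; split; last exact: upper.
  rewrite /word_length eval_prodv -(size_map (@letter_val G)).
  have := main (all_vals _ ha) (chain_vals _ ha hn).
  case: (map (@letter_val G) w) => [|v t].
    by rewrite /= act1 dxx mulr0.
  by case=> h _ _; apply: ltW.
move=> w1 w2 /andP [ha1 hn1] /andP [ha2 hn2]; rewrite !eval_prodv => e.
apply: map_letter_inj => //.
by apply: inj_vals => //; rewrite ?all_vals ?chain_vals.
Qed.

End Proof.

Theorem mainTheorem10 (G : groupType) (R : realType) (X : Type)
    (d : X -> X -> R) (act : G -> X -> X) (delta alpha : R)
    (U : seq G) (p : X) :
  is_metric d -> geodesic d -> (0 <= delta)%R -> hyperbolic d delta ->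
  isometric_action d act ->
  (3 * delta <= alpha)%R ->
  alpha_reduced d act delta alpha U p ->
  (forall w : seq (G * bool), reduced_word U w ->
     (2 * alpha * (word_length w)%:R <= d (act (word_eval w) p) p)%R /\
     (d (act (word_eval w) p) p <= Lmax d act U p * (word_length w)%:R)%R) /\
  (forall w1 w2 : seq (G * bool), reduced_word U w1 -> reduced_word U w2 ->
     word_eval w1 = word_eval w2 -> w1 = w2).
Proof.
move=> hm _ hd0 hhyp hact hal hred.
exact: (@final_stmt G R X d act delta alpha U p hm hd0 hhyp hact hal hred).
Qed.
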